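(* Let $n\ge 2$, $d\ge n+1$, and let $f$ be a Perazzo form of degree $d$ in $S$. If $A_f$ has the weak Lefschetz property, then $d\ge 2n$.
   Context: $K$ is an algebraically closed field of characteristic zero. $S=K[x_0,\dots,x_n,u,v]$ and $R=K[y_0,\dots,y_n,U,V]$ acts on $S$ by differentiation ($y_i=\partial/\partial x_i$, $U=\partial/\partial u$, $V=\partial/\partial v$). A Perazzo form of degree $d$ is $f=x_0p_0+x_1p_1+\cdots+x_np_n+g$ where $p_0,\dots,p_n\in K[u,v]_{d-1}$ are linearly independent but algebraically dependent forms and $g\in K[u,v]_d$. $\operatorname{Ann}_R(f)=\{\theta\in R:\theta\circ f=0\}$ and $A_f=R/\operatorname{Ann}_R(f)$ is a graded artinian Gorenstein algebra of socle degree $d$. A graded artinian algebra $A$ has the weak Lefschetz property (WLP) if there is $\ell\in[A]_1$ such that multiplication $\times\ell:[A]_i\to[A]_{i+1}$ has maximal rank (is injective or surjective) for every $i\ge 0$. *)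

(* Defs.v *)
From HB Require Import structures.
From mathcomp Require Import all_boot all_order all_algebra.
From mathcomp Require Export mpoly.
Set Implicit Arguments. Unset Strict Implicit. Unset Printing Implicit Defensive.
Import GRing.Theory.
Local Open Scope ring_scope.

(* S = K[x_0..x_n,u,v] is {mpoly K[n.+3]}: variable i <= n is x_i,
   variable n+1 is u, variable n+2 is v.  R = K[y_0..y_n,U,V] is the same
   type {mpoly K[n.+3]}, variable j acting as d/d(variable j) of S. *)

Section Perazzo.
Variables (K : fieldType) (n : nat).

Definition xvar (i : 'I_n.+1) : {mpoly K[n.+3]} := 'X_(inord i).
Definition uv_embed (q : {mpoly K[2]}) : {mpoly K[n.+3]} :=
  comp_mpoly [tuple 'X_(inord n.+1); 'X_(inord n.+2)] q.

Definition act (theta f : {mpoly K[n.+3]}) : {mpoly K[n.+3]} :=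
  \sum_(m <- msupp theta) theta@_m *: mderivm m f.

Definition perazzo_form (d : nat) (f : {mpoly K[n.+3]}) : Prop :=
  exists (p : 'I_n.+1 -> {mpoly K[2]}) (g : {mpoly K[2]}),
    [/\ forall i, p i \is (d.-1).-homog,
        forall c : 'I_n.+1 -> K, \sum_(i < n.+1) c i *: p i = 0 ->
          forall i, c i = 0,
        exists F : {mpoly K[n.+1]},
          F != 0 /\ comp_mpoly [tuple p i | i < n.+1] F = 0,
        g \is d.-homog &
        f = \sum_(i < n.+1) xvar i * uv_embed (p i) + uv_embed g].

(* Here
   [A_f]_i = R_i / (Ann_R(f) ∩ R_i), and injectivity / surjectivity of the
   induced map are written out on representatives. *)
Definition WLP (f : {mpoly K[n.+3]}) : Prop :=
  exists l : {mpoly K[n.+3]}, l \is 1.-homog /\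
    forall i : nat,
      (forall theta, theta \is i.-homog ->
         act (l * theta) f = 0 -> act theta f = 0)
      \/
      (forall eta, eta \is i.+1.-homog ->
         exists theta, theta \is i.-homog /\ act (eta - l * theta) f = 0).

End Perazzo.

(* Main.v *)
Require Import Defs.
From HB Require Import structures.
From mathcomp Require Import all_boot all_order all_algebra.
From mathcomp Require Import mpoly.
From mathcomp Require Import zify.
Set Implicit Arguments. Unset Strict Implicit. Unset Printing Implicit Defensive.
Import GRing.Theory.
Local Open Scope ring_scope.


Section Act.
Variables (K : fieldType) (n : nat).
Local Notation S := {mpoly K[n.+3]}.
Implicit Types (a b h : S).

Lemma act_sub a h (s : seq 'X_{1..n.+3}) : uniq s -> {subset msupp a <= s} ->
  act a h = \sum_(m <- s) a@_m *: h^`M[m].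
Proof.
move=> us sub; rewrite (bigID (fun m => m \in msupp a)) /=.
rewrite [X in _ + X]big1 ?addr0; last first.
  by move=> m /memN_msupp_eq0 ->; rewrite scale0r.
rewrite -big_filter /act; apply: perm_big; apply: uniq_perm.
- exact: msupp_uniq.
- exact: filter_uniq.
move=> m; rewrite mem_filter; case: (boolP (m \in msupp a)) => //= /sub ->.
by [].
Qed.

Lemma act0l h : act 0 h = 0.
Proof. by rewrite /act msupp0 big_nil. Qed.

Lemma actDl a b h : act (a + b) h = act a h + act b h.
Proof.
pose s := undup (msupp a ++ msupp b).
have us : uniq s by exact: undup_uniq.
have sa : {subset msupp a <= s} by move=> m ma; rewrite mem_undup mem_cat ma.
have sb : {subset msupp b <= s} by move=> m mb; rewrite mem_undup mem_cat mb orbT.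
have sab : {subset msupp (a + b) <= s}.
  by move=> m /msuppD_le; rewrite mem_undup.
rewrite (act_sub h us sa) (act_sub h us sb) (act_sub h us sab) -big_split /=.
by apply: eq_bigr => m _; rewrite mcoeffD scalerDl.
Qed.

Lemma actZl c a h : act (c *: a) h = c *: act a h.
Proof.
rewrite (act_sub h (msupp_uniq a) (@msuppZ_le _ _ c a)) /act scaler_sumr.
by apply: eq_bigr => m _; rewrite mcoeffZ scalerA.
Qed.

Lemma actNl a h : act (- a) h = - act a h.
Proof. by rewrite -scaleN1r actZl scaleN1r. Qed.

Lemma actBl a b h : act (a - b) h = act a h - act b h.
Proof. by rewrite actDl actNl. Qed.

Lemma act_suml (I : Type) (r : seq I) (P : pred I) (F : I -> S) h :
  act (\sum_(i <- r | P i) F i) h = \sum_(i <- r | P i) act (F i) h.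
Proof. by apply: (big_morph (fun a => act a h)) => [a b|]; rewrite ?actDl ?act0l. Qed.

Lemma actX m h : act 'X_[m] h = h^`M[m].
Proof. by rewrite /act msuppX big_seq1 mcoeffX eqxx scale1r. Qed.

Lemma act1 h : act 1 h = h.
Proof. by rewrite -mpolyX0 actX mderivm0m. Qed.

Lemma actDr a h1 h2 : act a (h1 + h2) = act a h1 + act a h2.
Proof. by rewrite /act -big_split; apply: eq_bigr => m _; rewrite mderivmD scalerDr. Qed.

Lemma actZr a c h : act a (c *: h) = c *: act a h.
Proof.
rewrite /act scaler_sumr; apply: eq_bigr => m _.
by rewrite (mderivmZ m c h) !scalerA mulrC.
Qed.

Lemma act0r a : act a 0 = 0.
Proof. by have := actZr a 0 0; rewrite !scale0r. Qed.

Lemma actNr a h : act a (- h) = - act a h.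
Proof. by rewrite -scaleN1r actZr scaleN1r. Qed.

Lemma actBr a h1 h2 : act a (h1 - h2) = act a h1 - act a h2.
Proof. by rewrite actDr actNr. Qed.

Lemma act_sumr (I : Type) (r : seq I) (P : pred I) (F : I -> S) a :
  act a (\sum_(i <- r | P i) F i) = \sum_(i <- r | P i) act a (F i).
Proof. by apply: (big_morph (act a)) => [h1 h2|]; rewrite ?actDr ?act0r. Qed.

Lemma actM a b h : act (a * b) h = act a (act b h).
Proof.
elim/mpolyind: a h => [|c m p _ _ IH] h; first by rewrite mul0r !act0l.
rewrite mulrDl actDl IH actDl -scalerAl !actZl; congr (_ *: _ + _).
elim/mpolyind: b h {IH} => [|c' m' q _ _ IHq] h; first by rewrite mulr0 !act0l act0r.
rewrite mulrDr actDl IHq actDl actDr -scalerAr !actZl actZr; congr (_ *: _ + _).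
by rewrite -mpolyXD !actX addmC mderivmDm.
Qed.

Lemma actC a b h : act (a * b) h = act b (act a h).
Proof. by rewrite mulrC actM. Qed.

Lemma actXU i h : act 'X_i h = h^`M(i).
Proof. by rewrite -mderivmU1m -actX. Qed.

End Act.


Section UV.
Variables (K : fieldType) (n : nat).
Local Notation S := {mpoly K[n.+3]}.
Implicit Types (a b h : S).

Definition isuv h := forall m, h@_m != 0 -> forall k : 'I_n.+3, (k <= n)%N -> m k = 0%N.

Lemma isuv0 : isuv 0.
Proof. by move=> m; rewrite mcoeff0 eqxx. Qed.

Lemma isuvD h1 h2 : isuv h1 -> isuv h2 -> isuv (h1 + h2).
Proof.
move=> u1 u2 m; rewrite mcoeffD => nz k kn.
case: (eqVneq h1@_m 0) => [e1|/u1 -> //]; apply: u2 => //.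
by move: nz; rewrite e1 add0r.
Qed.

Lemma isuvZ c h : isuv h -> isuv (c *: h).
Proof.
move=> u m; rewrite mcoeffZ => nz; apply: u.
by apply: contraNneq nz => ->; rewrite mulr0.
Qed.

Lemma isuv_sum (I : Type) (r : seq I) (P : pred I) (F : I -> S) :
  (forall i, P i -> isuv (F i)) -> isuv (\sum_(i <- r | P i) F i).
Proof.
by move=> H; elim/big_ind: _ => //; [exact: isuv0 | exact: isuvD].
Qed.

Lemma isuv_mderivm m0 h : isuv h -> isuv (h^`M[m0]).
Proof.
move=> u m; rewrite mcoeff_mderivm => nz k kn.
have : h@_(m0 + m) != 0 by apply: contraNneq nz => ->; rewrite mul0rn.
by move/u/(_ k kn)/eqP; rewrite mnmDE addn_eq0 => /andP[_ /eqP].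
Qed.

Lemma isuv_act a h : isuv h -> isuv (act a h).
Proof.
by move=> u; apply: isuv_sum => m _; apply/isuvZ/isuv_mderivm.
Qed.

Lemma isuv_dx h (k : 'I_n.+3) : isuv h -> (k <= n)%N -> h^`M(k) = 0.
Proof.
move=> u kn; apply/mpolyP => m; rewrite mcoeff_mderiv mcoeff0.
case: (eqVneq h@_(m + U_(k)) 0) => [->|/u/(_ k kn)]; first by rewrite mul0rn.
by rewrite mnmDE mnm1E eqxx addn1.
Qed.

Lemma homog_mderivm d m0 h : h \is d.-homog -> h^`M[m0] \is (d - mdeg m0)%N.-homog.
Proof.
move=> /dhomogP H; apply/dhomogP => m; rewrite mcoeff_msupp mcoeff_mderivm => nz.
have : h@_(m0 + m) != 0 by apply: contraNneq nz => ->; rewrite mul0rn.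
rewrite -mcoeff_msupp => /H <-. have E := mdegD m0 m. simpl in E. by rewrite /= E addKn.
Qed.

Lemma homog_act j d a h : a \is j.-homog -> h \is d.-homog -> act a h \is (d - j)%N.-homog.
Proof.
move=> /dhomogP Ha Hh; rewrite /act big_seq; apply: rpred_sum => m ma.
by apply: rpredZ; rewrite -(Ha m ma); apply: homog_mderivm.
Qed.

Hypothesis charK0 : [pchar K] =i pred0.

Lemma natr_neq0 k : (k != 0)%N -> (k%:R : K) != 0.
Proof. by move/pcharf0P: charK0 => ->. Qed.

Lemma pairing h m : m \in msupp h -> act 'X_[m] h != 0.
Proof.
move=> mh; rewrite actX; apply/eqP => /(congr1 (mcoeff 0%MM)).
rewrite mcoeff_mderivm mcoeff0 addm0 -mulr_natr => /eqP.
rewrite mulf_eq0 => /orP[]; first by rewrite mcoeff_eq0 mh.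
apply/negP/natr_neq0; rewrite -lt0n prodn_gt0 // => i. by rewrite ffactnn fact_gt0.
Qed.

Lemma euler h m : m \in msupp h -> m != 0%MM -> exists i, h^`M(i) != 0.
Proof.
move=> mh m0.
have [i mi] : exists i, (0 < m i)%N.
  apply/existsP; apply: contraR m0 => /existsPn H; apply/eqP/mnmP => i.
  by rewrite mnm0E; move: (H i); rewrite lt0n negbK => /eqP.
exists i; apply/eqP => /(congr1 (mcoeff (m - U_(i))%MM)).
have le : (U_(i) <= m)%MM.
  by apply/mnm_lepP => j; rewrite mnm1E; case: eqP => // <-.
rewrite mcoeff_mderiv submK // mcoeff0 -mulr_natr => /eqP.
rewrite mulf_eq0 => /orP[]; first by rewrite mcoeff_eq0 mh.
apply/negP/natr_neq0.
by [].
Qed.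

End UV.


Section Embed.
Variables (K : fieldType) (n : nat).
Local Notation S := {mpoly K[n.+3]}.

Definition vu : 'I_n.+3 := inord n.+1.
Definition vv : 'I_n.+3 := inord n.+2.

Lemma vuE : nat_of_ord vu = n.+1. Proof. by rewrite /vu inordK. Qed.
Lemma vvE : nat_of_ord vv = n.+2. Proof. by rewrite /vv inordK. Qed.
Lemma vuE' : \val vu = n.+1. Proof. exact: vuE. Qed.
Lemma vvE' : \val vv = n.+2. Proof. exact: vvE. Qed.

Definition phi (m : 'X_{1..2}) : 'X_{1..n.+3} :=
  (U_(vu) *+ m ord0 + U_(vv) *+ m (lift ord0 ord0))%MM.

Lemma vuv : (vu == vv) = false.
Proof. by apply/negbTE/eqP => /(congr1 (@nat_of_ord _)); rewrite vuE vvE; lia. Qed.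
Lemma vvu : (vv == vu) = false.
Proof. by rewrite eq_sym vuv. Qed.

Lemma phi_u m : phi m vu = m ord0.
Proof.
rewrite /phi mnmDE !mulmnE !mnm1E eqxx.
by rewrite vvu /= ?mul1n ?mul0n ?addn0.
Qed.

Lemma phi_v m : phi m vv = m (lift ord0 ord0).
Proof.
rewrite /phi mnmDE !mulmnE !mnm1E eqxx.
by rewrite vuv /= ?mul1n ?mul0n ?add0n.
Qed.

Lemma phi_x m (k : 'I_n.+3) : (k <= n)%N -> phi m k = 0%N.
Proof.
move=> kn; rewrite /phi mnmDE !mulmnE !mnm1E.
have -> : (vu == k) = false by apply/negbTE/eqP => E; move: kn; rewrite -E vuE; lia.
have -> : (vv == k) = false by apply/negbTE/eqP => E; move: kn; rewrite -E vvE; lia.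
by [].
Qed.

Lemma phi_inj : injective phi.
Proof.
move=> m1 m2 E; apply/mnmP => i.
case: i => [[|[|i]] Hi].
- have -> : Ordinal Hi = ord0 by apply: val_inj.
  by rewrite -!phi_u E.
- have -> : Ordinal Hi = lift ord0 ord0 by apply: val_inj.
  by rewrite -!phi_v E.
- by [].
Qed.

Lemma mdeg_phi m : mdeg (phi m) = mdeg m.
Proof.
rewrite /phi mdegD !mdegMn !mdeg1 !mul1n [RHS]mdegE.
by rewrite !big_ord_recl big_ord0 addn0.
Qed.

Lemma comp_X m : @uv_embed K n ('X_[m] : {mpoly K[2]}) = 'X_[phi m].
Proof.
rewrite /uv_embed comp_mpolyX !big_ord_recl big_ord0 mulr1 /=.
rewrite /phi mpolyXD -!mpolyXn.
by congr (_ ^+ _ * _ ^+ _); rewrite /tnth /=.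
Qed.

Lemma uv_embedE q : @uv_embed K n q = \sum_(m <- msupp q) q@_m *: 'X_[phi m].
Proof.
by rewrite /uv_embed comp_mpolyEX; apply: eq_bigr => m _; rewrite -comp_X.
Qed.

Lemma uv_embed_coef q m : (@uv_embed K n q)@_(phi m) = q@_m.
Proof.
rewrite uv_embedE.
transitivity ((\sum_(m0 <- msupp q) q@_m0 *: 'X_[m0])@_m); last by rewrite -mpolyE.
rewrite !raddf_sum /=; apply: eq_bigr => m' _; rewrite !mcoeffZ !mcoeffX.
by rewrite (inj_eq phi_inj).
Qed.

Lemma uv_embed_inj q : @uv_embed K n q = 0 -> q = 0.
Proof.
by move=> E; apply/mpolyP => m; rewrite -uv_embed_coef E !mcoeff0.
Qed.

Lemma uv_embed_lin : linear (@uv_embed K n).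
Proof. by move=> c p q; rewrite /uv_embed comp_mpolyD comp_mpolyZ. Qed.

Lemma isuv_embed q : isuv (@uv_embed K n q).
Proof.
rewrite uv_embedE; apply: isuv_sum => m _; apply: isuvZ => m'.
rewrite mcoeffX; case: (eqVneq (phi m) m') => [<- _ k kn|ne]; first by rewrite phi_x.
by rewrite eqxx.
Qed.

Lemma homog_embed d q : q \is d.-homog -> @uv_embed K n q \is d.-homog.
Proof.
move=> /dhomogP H; rewrite uv_embedE big_seq; apply: rpred_sum => m mq.
by apply: rpredZ; rewrite dhomogX /= mdeg_phi H.
Qed.

End Embed.


Section Fderiv.
Variables (K : fieldType) (n : nat).
Local Notation S := {mpoly K[n.+3]}.
Variables (p : 'I_n.+1 -> {mpoly K[2]}) (g : {mpoly K[2]}).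
Let f : S := \sum_(i < n.+1) @xvar K n i * @uv_embed K n (p i) + @uv_embed K n g.

Lemma inord_xE (k : 'I_n.+1) : nat_of_ord (inord k : 'I_n.+3) = k.
Proof. by rewrite inordK //; have := ltn_ord k; lia. Qed.

Lemma inord_x_eq (i k : 'I_n.+1) : ((inord i : 'I_n.+3) == inord k) = (i == k).
Proof.
apply/eqP/eqP => [E|->//]; apply: val_inj => /=.
by rewrite -inord_xE E inord_xE.
Qed.

Lemma inord_x_le (k : 'I_n.+1) : ((inord k : 'I_n.+3) <= n)%N.
Proof. by rewrite inord_xE -ltnS. Qed.

Lemma dx_f (k : 'I_n.+1) : f^`M(inord k) = @uv_embed K n (p k).
Proof.
rewrite /f mderivD (isuv_dx (@isuv_embed K n g) (inord_x_le k)) addr0.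
rewrite raddf_sum /= (bigD1 k) //= big1 ?addr0; last first.
  move=> i ik; rewrite mderivM (isuv_dx (@isuv_embed K n (p i)) (inord_x_le k)) mulr0 addr0.
  by rewrite /xvar mderivX mnm1E inord_x_eq (negbTE ik) scale0r mul0r.
rewrite mderivM (isuv_dx (@isuv_embed K n (p k)) (inord_x_le k)) mulr0 addr0.
by rewrite /xvar mderivX mnm1E eqxx scale1r (_ : (U_(inord k) - U_(inord k))%MM = 0%MM) ?mpolyX0 ?mul1r //; apply/mnmP => j; rewrite mnmBE mnm0E subnn.
Qed.

Definition Yw (w : 'I_n.+1 -> K) : S := \sum_(k < n.+1) w k *: 'X_(inord k).

Lemma act_Yw w : act (Yw w) f = @uv_embed K n (\sum_(k < n.+1) w k *: p k).
Proof.
rewrite /Yw act_suml /uv_embed linear_sum /=; apply: eq_bigr => k _.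
by rewrite actZl actXU dx_f /uv_embed linearZ.
Qed.

Lemma homog_Yw w : Yw w \is 1.-homog.
Proof.
rewrite /Yw; apply: rpred_sum => k _; apply: rpredZ.
by rewrite dhomogX /= mdeg1.
Qed.

End Fderiv.


Section LinAlg.
Variables (K : fieldType) (n : nat).
Local Notation S := {mpoly K[n.+3]}.

Lemma idx_cases (i : 'I_n.+3) : [\/ i = vu n, i = vv n | (i <= n)%N].
Proof.
case: (ltnP n i) => [lt|le]; last by constructor 3.
have : (i == n.+1 :> nat) || (i == n.+2 :> nat).
  by have := ltn_ord i; move: lt; clear; lia.
case/orP => /eqP E.
- by constructor 1; apply: val_inj; rewrite /= E; symmetry; exact: vuE.
- by constructor 2; apply: val_inj; rewrite /= E; symmetry; exact: vvE.
Qed.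

Definition mon (D a : nat) : 'X_{1..n.+3} := (U_(vu n) *+ a + U_(vv n) *+ (D - a))%MM.

Lemma mdeg_uv (m : 'X_{1..n.+3}) : (forall k : 'I_n.+3, (k <= n)%N -> m k = 0%N) ->
  mdeg m = (m (vu n) + m (vv n))%N.
Proof.
move=> H; rewrite mdegE (bigD1 (vu n)) // (bigD1 (vv n)) /=; last by rewrite vvu.
rewrite big1 ?addn0 // => i /andP[iu iv].
by case: (idx_cases i) => [E|E|/H //]; [move: iu | move: iv]; rewrite E eqxx.
Qed.

Lemma uv_mon D (m : 'X_{1..n.+3}) : (forall k : 'I_n.+3, (k <= n)%N -> m k = 0%N) ->
  mdeg m = D -> m = mon D (m (vu n)).
Proof.
move=> H; rewrite mdeg_uv // => E; apply/mnmP => i.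
rewrite /mon mnmDE !mulmnE !mnm1E.
case: (idx_cases i) => [->|->|le].
- by rewrite eqxx vvu /=; lia.
- by rewrite eqxx vuv /=; lia.
have -> : (vu n == i) = false by apply/negbTE/eqP => Ei; move: le; rewrite -Ei vuE; lia.
have -> : (vv n == i) = false by apply/negbTE/eqP => Ei; move: le; rewrite -Ei vvE; lia.
by rewrite H.
Qed.

Lemma exists_ker (D : nat) (H : 'I_n.+1 -> S) : (D < n)%N ->
  (forall k, isuv (H k)) -> (forall k, H k \is D.-homog) ->
  exists w : 'I_n.+1 -> K, (exists k, w k != 0) /\ \sum_k w k *: H k = 0.
Proof.
move=> Dn Huv Hh.
pose A : 'M[K]_(n.+1, D.+1) := \matrix_(k, a) (H k)@_(mon D a).
have rk : \rank (kermx A) != 0%N.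
  rewrite mxrank_ker; have := rank_leq_col A; move: Dn; clear; lia.
have [i nzi] : exists i, row i (kermx A) != 0.
  apply/existsP; apply: contraR rk => /existsPn Hr.
  rewrite (_ : kermx A = 0) ?mxrank0 //; apply/row_matrixP => i.
  by move: (Hr i); rewrite negbK => /eqP ->; rewrite row0.
pose w k := row i (kermx A) 0 k.
have wA : row i (kermx A) *m A = 0 by rewrite -row_mul mulmx_ker row0.
exists w; split.
  apply/existsP; apply: contraR nzi => /existsPn Hw; apply/eqP/rowP => k.
  by move: (Hw k); rewrite negbK /w => /eqP ->; rewrite mxE.
apply/mpolyP => m; rewrite mcoeff0.
have uvs : isuv (\sum_k w k *: H k) by apply: isuv_sum => k _; apply/isuvZ.
have hs : \sum_k w k *: H k \is D.-homog by apply: rpred_sum => k _; apply/rpredZ.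
case: (eqVneq (\sum_k w k *: H k)@_m 0) => // nz.
have md : mdeg m = D by move/dhomogP: hs; apply; rewrite mcoeff_msupp.
have Em := uv_mon (uvs m nz) md.
have mu : (m (vu n) < D.+1)%N by rewrite ltnS -md mdeg_uv ?leq_addr //; exact: uvs m nz.
move/rowP: wA => /(_ (Ordinal mu)); rewrite !mxE => E.
rewrite {1}Em raddf_sum /=; apply: (etrans _ E); apply: eq_bigr => k _.
by rewrite mcoeffZ /w !mxE.
Qed.

End LinAlg.


Section Binary.
Variables (K : fieldType) (n : nat).
Local Notation S := {mpoly K[n.+3]}.
Hypothesis charK0 : [pchar K] =i pred0.

Lemma mnm1_eq (i j : 'I_n.+3) : (U_(i) == U_(j) :> 'X_{1..n.+3})%MM = (i == j).
Proof.
apply/eqP/eqP => [E|->//]; move/mnmP/(_ i): E; rewrite !mnm1E eqxx.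
by case: (eqVneq j i).
Qed.

Lemma homog1E (l : S) : l \is 1.-homog -> l = \sum_(i < n.+3) l@_(U_(i)) *: 'X_i.
Proof.
move=> /dhomogP Hl; apply/mpolyP => m; rewrite raddf_sum /=.
case: (boolP (m \in msupp l)) => [ml|nml].
  have /mdeg1P [j /eqP Ej] : mdeg m == 1%N by rewrite Hl.
  rewrite (bigD1 j) //= big1 ?addr0.
    by rewrite mcoeffZ mcoeffX Ej eqxx mulr1.
  by move=> i ij; rewrite mcoeffZ mcoeffX Ej mnm1_eq (negbTE ij) mulr0.
rewrite (memN_msupp_eq0 nml) big1 // => i _; rewrite mcoeffZ mcoeffX.
by case: eqP => [->|_]; rewrite ?(memN_msupp_eq0 nml) ?mul0r ?mulr0.
Qed.

Lemma act_lin_uv (l h : S) : l \is 1.-homog -> isuv h ->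
  act l h = l@_(U_(vu n)) *: h^`M(vu n) + l@_(U_(vv n)) *: h^`M(vv n).
Proof.
move=> hl uh; rewrite {1}(homog1E hl) act_suml (bigD1 (vu n)) // (bigD1 (vv n)) /=; last by rewrite vvu.
rewrite big1 ?addr0 ?actZl ?actXU ?addrA // => i /andP[iu iv].
rewrite actZl actXU; case: (idx_cases i) => [E|E|le].
- by move: iu; rewrite E eqxx.
- by move: iv; rewrite E eqxx.
by rewrite (isuv_dx uh le) scaler0.
Qed.

Variables (b c : K).
Definition Lop : S := if c != 0 then b *: 'X_(vu n) + c *: 'X_(vv n) else 'X_(vu n).
Definition Mop : S := if c != 0 then 'X_(vu n) else 'X_(vv n).

Lemma homog_Lop : Lop \is 1.-homog.
Proof.
rewrite /Lop; case: ifP => _; last by rewrite dhomogX /= mdeg1.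
by apply: rpredD; apply: rpredZ; rewrite dhomogX /= mdeg1.
Qed.

Lemma homog_Mop : Mop \is 1.-homog.
Proof. by rewrite /Mop; case: ifP => _; rewrite dhomogX /= mdeg1. Qed.

Lemma LopE h : act Lop h = if c != 0 then b *: h^`M(vu n) + c *: h^`M(vv n) else h^`M(vu n).
Proof. by rewrite /Lop; case: ifP => _; rewrite ?actDl ?actZl !actXU. Qed.

Lemma Lop_kill (l h : S) : l \is 1.-homog -> isuv h ->
  l@_(U_(vu n)) = b -> l@_(U_(vv n)) = c -> act Lop h = 0 -> act l h = 0.
Proof.
move=> hl uh Eb Ec; rewrite (act_lin_uv hl uh) Eb Ec LopE.
case: ifP => [_ //| /negbFE/eqP ->]; by move=> ->; rewrite scale0r scaler0 addr0.
Qed.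

Lemma LM_kill h : act Lop h = 0 -> act Mop h = 0 ->
  h^`M(vu n) = 0 /\ h^`M(vv n) = 0.
Proof.
rewrite LopE /Mop; case: ifP => [cn|_] HL; rewrite actXU => HM; last by [].
split => //; move: HL; rewrite HM scaler0 add0r => /eqP.
by rewrite scaler_eq0 (negbTE cn) /= => /eqP.
Qed.

Lemma LM_comm a h : act Lop (act a h) = act a (act Lop h).
Proof. by rewrite -actM mulrC actM. Qed.

Lemma no_double_kill (h : S) e : isuv h -> h \is e.-homog -> (0 < e)%N -> h != 0 ->
  act Lop h = 0 -> act Mop h = 0 -> False.
Proof.
move=> uh /dhomogP hh e0 nz HL HM.
have [m mh] : exists m, m \in msupp h.
  case E: (msupp h) => [|m s]; last by exists m; exact: mem_head.
  by move: nz; rewrite (msuppnil0 E) eqxx.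
have m0 : m != 0%MM by rewrite -mdeg_eq0 hh //; move: e0; clear; lia.
have [i] := euler charK0 mh m0.
have [Du Dv] := LM_kill HL HM.
case: (idx_cases i) => [->|->|le]; first by rewrite Du eqxx.
  by rewrite Dv eqxx.
by rewrite (isuv_dx uh le) eqxx.
Qed.

Lemma chain (h : S) e : isuv h -> h \is e.-homog -> h != 0 -> act Lop h = 0 ->
  forall s, (s <= e)%N ->
  [/\ act (Mop ^+ s) h != 0, act Lop (act (Mop ^+ s) h) = 0,
      isuv (act (Mop ^+ s) h) & act (Mop ^+ s) h \is (e - s)%N.-homog].
Proof.
move=> uh hh nz HL; elim => [_|s IH lt].
  by rewrite expr0 act1 subn0.
have [nz' HL' uh' hh'] := IH (ltnW lt).
have E : act (Mop ^+ s.+1) h = act Mop (act (Mop ^+ s) h) by rewrite exprS actM.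
have HL2 : act Lop (act (Mop ^+ s.+1) h) = 0 by rewrite E LM_comm HL' act0r.
split => //.
- apply/negP => /eqP Z; apply: (no_double_kill uh' hh' _ nz' HL'); last by rewrite -E.
  by move: lt; clear; lia.
- by rewrite E; apply: isuv_act.
rewrite E (_ : (e - s.+1 = (e - s) - 1)%N); last by move: lt; clear; lia.
by apply: homog_act => //; apply: homog_Mop.
Qed.

Lemma last_nonzero (P : nat -> bool) r : P 0%N -> ~~ P r ->
  exists t, [/\ (t < r)%N, P t & ~~ P t.+1].
Proof.
move=> P0; elim: r => [|r IH] Pr; first by rewrite P0 in Pr.
case: (boolP (P r)) => Pr'; first by exists r; split.
by have [t [tr Pt Pt1]] := IH Pr'; exists t; split => //; apply: ltnW.
Qed.

End Binary.


Section Main.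
Variables (K : fieldType) (n d : nat).
Local Notation S := {mpoly K[n.+3]}.
Hypothesis charK0 : [pchar K] =i pred0.
Variables (p : 'I_n.+1 -> {mpoly K[2]}) (g : {mpoly K[2]}).
Hypothesis n1 : (1 <= n)%N.
Hypothesis dn : (n.+1 <= d)%N.
Hypothesis hp : forall i, p i \is (d.-1).-homog.
Hypothesis indep : forall c : 'I_n.+1 -> K, \sum_(i < n.+1) c i *: p i = 0 -> forall i, c i = 0.
Let f : S := \sum_(i < n.+1) @xvar K n i * @uv_embed K n (p i) + @uv_embed K n g.

Lemma homog_pow (a : S) k : a \is 1.-homog -> a ^+ k \is k.-homog.
Proof. by move=> ha; have := dhomogMn k ha; rewrite mul1n. Qed.

Lemma inj_fail (l : S) j : l \is 1.-homog -> (d - n <= j)%N -> (1 <= j)%N -> (j <= d.-1)%N ->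
  exists theta : S, [/\ theta \is j.-homog, act theta f != 0, act (l * theta) f = 0
                       & act theta f \is (d - j)%N.-homog].
Proof.
move=> hl jlo j1 jhi.
pose b := l@_(U_(vu n)); pose c := l@_(U_(vv n)).
pose L : S := @Lop K n b c; pose M : S := @Mop K n c.
have hL : L \is 1.-homog by apply: homog_Lop.
have hM : M \is 1.-homog by apply: homog_Mop.
pose r := (d - n)%N.
pose H k := act (L ^+ r) (@uv_embed K n (p k)).
have [w [[k0 wk0] Hw]] : exists w : 'I_n.+1 -> K, (exists k, w k != 0) /\ \sum_k w k *: H k = 0.
  apply: (@exists_ker K n n.-1) => [|k|k]; first by move: n1; clear; lia.
    exact/isuv_act/isuv_embed.
  have := homog_act (homog_pow r hL) (@homog_embed K n _ _ (hp k)).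
  by rewrite (_ : (d.-1 - r = n.-1)%N) //; move: dn; rewrite /r; clear; lia.
pose P := \sum_(k < n.+1) w k *: p k.
pose eP := @uv_embed K n P.
have ePE : eP = \sum_k w k *: @uv_embed K n (p k).
  by rewrite /eP /P /uv_embed linear_sum; apply: eq_bigr => k _; rewrite linearZ.
have ePr : act (L ^+ r) eP = 0.
  by rewrite ePE act_sumr; apply: (etrans _ Hw); apply: eq_bigr => k _; rewrite actZr.
have ePnz : eP != 0.
  apply/eqP => /uv_embed_inj E; move: wk0; rewrite (indep E) eqxx //.
have ePuv : isuv eP by exact: isuv_embed.
have ePh : eP \is (d.-1).-homog.
  by rewrite /eP; apply: homog_embed; rewrite /P; apply: rpred_sum => k _; apply/rpredZ/hp.
have P0 : act (L ^+ 0) eP != 0 by rewrite expr0 act1.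
have Pr : ~~ (act (L ^+ r) eP != 0) by rewrite ePr eqxx.
have [t [tr Pt Pt1]] := @last_nonzero (fun t => act (L ^+ t) eP != 0) r P0 Pr.
pose q := act (L ^+ t) eP.
have qL : act L q = 0 by move: Pt1; rewrite negbK exprS actM => /eqP.
have quv : isuv q by exact: isuv_act.
have qh : q \is (d.-1 - t)%N.-homog by exact: homog_act (homog_pow t hL) ePh.
pose s := (j.-1 - t)%N.
have sle : (s <= d.-1 - t)%N by move: tr jhi; rewrite /s /r; clear; lia.
have [Cnz CL Cuv Ch] := @chain K n charK0 b c q _ quv qh Pt qL s sle.
exists (@Yw K n w * (L ^+ t * M ^+ s)).
have Eth : act (@Yw K n w * (L ^+ t * M ^+ s)) f = act (M ^+ s) q.
  by rewrite actC /f act_Yw -/P -/eP actC.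
rewrite Eth; split => //.
- have := dhomogM (@homog_Yw K n w) (dhomogM (homog_pow t hL) (homog_pow s hM)).
  by rewrite (_ : (1 + (t + s) = j)%N) //; move: tr jlo j1; rewrite /s /r; clear; lia.
- rewrite actM Eth; apply: (Lop_kill hl Cuv) => //.
- by rewrite (_ : (d - j = d.-1 - t - s)%N) //; move: tr jlo j1 jhi; rewrite /s /r; clear; lia.
Qed.

End Main.

Unset Implicit Arguments.

Theorem corollary4p6 (K : closedFieldType) (charK0 : [pchar K] =i pred0)
  (n d : nat) (f : {mpoly K[n.+3]}) :
  (2 <= n)%N -> (n.+1 <= d)%N ->
  perazzo_form d f -> WLP f -> (2 * n <= d)%N.
Proof.
move=> n2 dn [p [g [hp indep _ _ ->]]] [l [hl Hw]].
rewrite leqNgt; apply/negP => dlt.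
have n1 : (1 <= n)%N by move: n2; clear; lia.
pose i := ((d - 1) %/ 2)%N.
case: (Hw i) => [Hinj|Hsurj].
- have [th [hth nz kl _]] := inj_fail charK0 g n1 dn hp indep (j := i) hl
    ltac:(move: dlt dn n2; rewrite /i; clear; lia)
    ltac:(move: dlt dn n2; rewrite /i; clear; lia)
    ltac:(move: dlt dn n2; rewrite /i; clear; lia).
  by move: nz; rewrite (Hinj th hth kl) eqxx.
have [ps [hps nz kl hh]] := inj_fail charK0 g n1 dn hp indep (j := (d.-1 - i)%N) hl
    ltac:(move: dlt dn n2; rewrite /i; clear; lia)
    ltac:(move: dlt dn n2; rewrite /i; clear; lia)
    ltac:(move: dlt dn n2; rewrite /i; clear; lia).
set F := (\sum_(i < n.+1) _ + _) in nz kl hh *.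
set h := act ps F in nz hh.
have [m mh] : exists m, m \in msupp h.
  case E: (msupp h) => [|m s]; last by exists m; exact: mem_head.
  by move: nz; rewrite (msuppnil0 E) eqxx.
have hX : ('X_[m] : {mpoly K[n.+3]}) \is i.+1.-homog.
  rewrite dhomogX /=; move/dhomogP: hh => /(_ m mh) ->.
  by move: dlt dn n2; rewrite /i; clear; lia.
have [th [hth E]] := Hsurj _ hX.
have : act 'X_[m] h = 0.
  have := congr1 (act ps) E; rewrite act0r -actM mulrBr actBl.
  have -> : ps * (l * th) = th * (l * ps) by rewrite mulrA mulrC [ps * l]mulrC.
  by rewrite (actM th) kl act0r subr0 actC.
by move/eqP; rewrite (negbTE (pairing charK0 mh)).
Qed.
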